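(* Let $R\subset S$ be an integral FCP ring extension. Then $R\subset S$ has a critical ideal if and only if $R\subset S$ is $M$-crucial for some $M\in\mathrm{Max}(R)$. In this case $M$ is the critical ideal of the extension and $M=\sqrt{(R:R[x])}$ for each $x\in S\setminus R$.
   Context: Rings are commutative and unital. An extension $R\subseteq S$ is FCP if every chain in the poset of $R$-subalgebras of $S$ is finite. $(R:T)=\{r\in R\mid rT\subseteq R\}$ for $T\supseteq R$, and $R:x=\{r\in R\mid rx\in R\}$. An ideal $J$ of $R$ is a critical ideal of $R\subset S$ if $J=\sqrt{R:x}$ for every $x\in S\setminus R$. $R\subset S$ is $M$-crucial if $\mathrm{Supp}_R(S/R)=\{P\in\mathrm{Spec}(R)\mid R_P\neq S_P\}=\{M\}$. *)

(* Defs.v *)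
(* A ring extension R ⊆ S is modelled as a commutative ring S
   together with a subring R of S, given as a predicate on S. *)
From Stdlib Require List.
From mathcomp Require Import all_boot all_algebra.
Set Implicit Arguments. Unset Strict Implicit. Unset Printing Implicit Defensive.
Import GRing.Theory.
Local Open Scope ring_scope.

Section Defs.
Variable S : comNzRingType.
Implicit Types (R T P J M I : S -> Prop).

Definition is_subring T : Prop :=
  T 1 /\ (forall x y, T x -> T y -> T (x - y)) /\ (forall x y, T x -> T y -> T (x * y)).

Definition subalgebra R T : Prop := is_subring T /\ (forall x, R x -> T x).

Definition is_chain R (C : (S -> Prop) -> Prop) : Prop :=
  (forall T, C T -> subalgebra R T) /\
  (forall T1 T2, C T1 -> C T2 -> (forall x, T1 x -> T2 x) \/ (forall x, T2 x -> T1 x)).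
Definition finite_family (C : (S -> Prop) -> Prop) : Prop :=
  exists l : seq (S -> Prop), forall T, C T -> exists2 T', List.In T' l & forall x, T x <-> T' x.
Definition FCP R : Prop := forall C, is_chain R C -> finite_family C.

Definition integral_over R (s : S) : Prop :=
  exists (n : nat) (c : nat -> S), (forall i, R (c i)) /\
    s ^+ n + \sum_(i < n) c i * s ^+ i = 0.
Definition integral_ext R : Prop := forall s, integral_over R s.

Definition ideal_of R I : Prop :=
  (forall x, I x -> R x) /\ I 0 /\ (forall x y, I x -> I y -> I (x + y)) /\
  (forall r x, R r -> I x -> I (r * x)).
Definition prime_of R P : Prop :=
  ideal_of R P /\ ~ P 1 /\ (forall x y, R x -> R y -> P (x * y) -> P x \/ P y).
Definition maximal_of R M : Prop :=
  ideal_of R M /\ ~ M 1 /\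
  (forall I, ideal_of R I -> (forall x, M x -> I x) -> I 1 \/ (forall x, I x <-> M x)).

Definition colonR R (x : S) : S -> Prop := fun r => R r /\ R (r * x).
Definition conductorR R T : S -> Prop := fun r => R r /\ forall y, T y -> R (r * y).
Definition radR R I : S -> Prop := fun r => R r /\ exists n : nat, I (r ^+ n).
Definition adjoinR R (x : S) : S -> Prop :=
  fun y => exists (n : nat) (c : nat -> S), (forall i, R (c i)) /\ y = \sum_(i < n) c i * x ^+ i.

Definition critical_ideal R J : Prop :=
  ideal_of R J /\ forall x, ~ R x -> forall r, J r <-> radR R (colonR R x) r.

(* P ∈ Supp_R(S/R), i.e. R_P ≠ S_P, i.e. (S/R)_P ≠ 0:
   some s ∈ S is not killed in (S/R)_P by any t ∈ R \ P *)
Definition in_supp R P : Prop :=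
  prime_of R P /\ exists s : S, forall t, R t -> ~ P t -> ~ R (t * s).
Definition crucial R M : Prop :=
  forall P, in_supp R P <-> (prime_of R P /\ forall x, P x <-> M x).

End Defs.

(* Main.v *)
Require Import Defs.
From mathcomp Require Import all_boot all_algebra.
From mathcomp Require Import ring zify.
From mathcomp Require classical_sets.
From Stdlib Require Import Classical.
Set Implicit Arguments. Unset Strict Implicit. Unset Printing Implicit Defensive.
Import GRing.Theory.
Local Open Scope ring_scope.

Section Basic.
Variable S : comNzRingType.
Variable R : S -> Prop.
Hypothesis HR : is_subring R.

Lemma R1 : R 1. Proof. by case: HR. Qed.
Lemma RB x y : R x -> R y -> R (x - y). Proof. by case: HR => _ [H _]; apply: H. Qed.
Lemma RM x y : R x -> R y -> R (x * y). Proof. by case: HR => _ [_ H]; apply: H. Qed.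
Lemma R0 : R 0. Proof. by rewrite -(subrr 1); apply: RB; apply: R1. Qed.
Lemma RN x : R x -> R (- x). Proof. by move=> h; rewrite -sub0r; apply: RB => //; apply: R0. Qed.
Lemma RD x y : R x -> R y -> R (x + y).
Proof. by move=> hx hy; rewrite -(opprK y); apply: RB => //; apply: RN. Qed.
Lemma RX x n : R x -> R (x ^+ n).
Proof. by move=> hx; elim: n => [|n IH]; [rewrite expr0; apply: R1| rewrite exprS; apply: RM]. Qed.
Lemma Rsum n (F : 'I_n -> S) : (forall i, R (F i)) -> R (\sum_(i < n) F i).
Proof. by move=> h; apply: (big_ind R) => //; [apply: R0|apply: RD]. Qed.

End Basic.

Section Span.
Variable S : comNzRingType.
Variable R : S -> Prop.
Hypothesis HR : is_subring R.

Definition span (d : nat) (x z : S) :=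
  exists e : nat -> S, (forall j, R (e j)) /\ z = \sum_(j < d) e j * x ^+ j.

Variables (d : nat) (x : S).

Lemma span0 : span d x 0.
Proof. exists (fun _ => 0); split=> [j|]; first exact: R0. by rewrite big1 // => j _; rewrite mul0r. Qed.

Lemma spanD u v : span d x u -> span d x v -> span d x (u + v).
Proof.
move=> [e [he ->]] [f [hf ->]]; exists (fun j => e j + f j); split.
  by move=> j; apply: RD.
by rewrite -big_split /=; apply: eq_bigr => j _; rewrite mulrDl.
Qed.

Lemma spanM c u : R c -> span d x u -> span d x (c * u).
Proof.
move=> hc [e [he ->]]; exists (fun j => c * e j); split.
  by move=> j; apply: RM.
by rewrite mulr_sumr; apply: eq_bigr => j _; rewrite mulrA.
Qed.

Lemma spanN u : span d x u -> span d x (- u).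
Proof. by move=> h; rewrite -mulN1r; apply: spanM => //; apply: RN => //; apply: R1. Qed.

Lemma spanB u v : span d x u -> span d x v -> span d x (u - v).
Proof. by move=> hu hv; apply: spanD => //; apply: spanN. Qed.

Lemma span_sum n (F : 'I_n -> S) : (forall i, span d x (F i)) -> span d x (\sum_(i < n) F i).
Proof. by move=> h; apply: (big_ind (span d x)) => //; [apply: span0|apply: spanD]. Qed.

Lemma span_small m : (m < d)%N -> span d x (x ^+ m).
Proof.
move=> hm; exists (fun j => if j == m then 1 else 0); split.
  by move=> j; case: eqP => _; [apply: R1|apply: R0].
rewrite (bigD1 (Ordinal hm)) //= eqxx mul1r big1 ?addr0 //.
move=> j hj; case: eqP => [hjm|_]; last by rewrite mul0r.
by exfalso; move/eqP: hj; apply; apply: val_inj.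
Qed.

Variable c : nat -> S.
Hypothesis hc : forall i, R (c i).
Hypothesis heq : x ^+ d + \sum_(i < d) c i * x ^+ i = 0.

Lemma span_pow m : span d x (x ^+ m).
Proof.
elim: m {-2}m (leqnn m) => [|n IH] m hm.
  case: (ltnP m d) => hmd; first exact: span_small.
  move: hm; rewrite leqn0 => /eqP hm0; subst m.
  have hd : d = 0%N by apply/eqP; rewrite -leqn0.
  subst d. exfalso; move: heq; rewrite big_ord0 addr0 expr0 => /eqP; by rewrite oner_eq0.
case: (ltnP m d) => hmd; first exact: span_small.
have -> : x ^+ m = x ^+ (m - d) * x ^+ d by rewrite -exprD subnK.
have -> : x ^+ d = - \sum_(i < d) c i * x ^+ i by apply/eqP; rewrite -subr_eq0 opprK heq.
rewrite mulrN mulr_sumr; apply: spanN; apply: span_sum => i.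
rewrite mulrCA -exprD; apply: spanM => //; apply: IH.
have := ltn_ord i; move: hm hmd; clear; lia.
Qed.

Lemma span_mulr u v : span d x u -> span d x v -> span d x (u * v).
Proof.
move=> [e [he ->]] [f [hf ->]]; rewrite mulr_suml; apply: span_sum => i.
rewrite mulr_sumr; apply: span_sum => j.
rewrite mulrACA -exprD; apply: spanM; first by apply: RM.
exact: span_pow.
Qed.

Lemma span_R a : R a -> span d x a.
Proof. by move=> ha; rewrite -[a]mulr1 -(expr0 x); apply: spanM => //; apply: span_pow. Qed.

Lemma span_adjoin y : adjoinR R x y -> span d x y.
Proof. move=> [n [e [he ->]]]; apply: span_sum => i; apply: spanM => //; exact: span_pow. Qed.

End Span.

Section Nak.
Variable S : comNzRingType.
Variable R : S -> Prop.
Hypothesis HR : is_subring R.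

Lemma nak (r : S) : R r -> forall k (B : S -> Prop) (g : nat -> S),
  B 0 -> (forall u v, B u -> B v -> B (u + v)) -> (forall c u, R c -> B u -> B (c * u)) ->
  (forall i, (i < k)%N -> exists b (e : nat -> S), B b /\ (forall j, R (e j)) /\
      g i = b + r * \sum_(j < k) e j * g j) ->
  exists t, R t /\ forall i, (i < k)%N -> B ((1 - r * t) * g i).
Proof.
move=> hr; elim=> [|k IH] B g hB0 hBD hBM H.
  by exists 0; split=> [|i //]; apply: R0.
pose B' := fun z => exists b c, B b /\ R c /\ z = b + c * g k.
have hB'0 : B' 0.
  by exists 0, 0; split=> //; split; [apply: R0|rewrite mul0r addr0].
have hB'D : forall u v, B' u -> B' v -> B' (u + v).
  move=> u v [b [c [hb [hc ->]]]] [b' [c' [hb' [hc' ->]]]].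
  exists (b + b'), (c + c'); split; first by apply: hBD.
  split; first by apply: RD. ring.
have hB'M : forall a u, R a -> B' u -> B' (a * u).
  move=> a u ha [b [c [hb [hc ->]]]].
  exists (a * b), (a * c); split; first by apply: hBM.
  split; first by apply: RM. ring.
have [t [ht hB']] : exists t, R t /\ forall i, (i < k)%N -> B' ((1 - r * t) * g i).
  apply: IH => // i hi.
  have [b [e [hb [he Hi]]]] := H i (leqW hi).
  exists (b + (r * e k) * g k), e; split.
    by exists b, (r * e k); split=> //; split=> //; apply: RM.
  split=> //; rewrite Hi big_ord_recr /=; ring.
have [b [e [hb [he Hk]]]] := H k (ltnSn k).
have : B' (\sum_(j < k) e j * ((1 - r * t) * g j)).
  apply: (big_ind B') => //; move=> j _; apply: hB'M => //; exact: hB'.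
move=> [b' [c' [hb' [hc' Esum0]]]].
have Esum : (1 - r * t) * \sum_(j < k) e j * g j = b' + c' * g k.
  by rewrite -Esum0 mulr_sumr; apply: eq_bigr => j _; rewrite mulrCA.
have E1 : (1 - r * t) * g k = (1 - r * t) * b + r * (b' + c' * g k) + r * e k * ((1 - r * t) * g k).
  rewrite -Esum {1}Hk big_ord_recr /=; ring.
pose w := t + c' + e k * (1 - r * t).
have Rrt : R (1 - r * t) by apply: RB => //; [apply: R1|apply: RM].
have Rw : R w by apply: RD => //; [apply: RD|apply: RM].
pose u := 1 - r * w.
have Ru : R u by apply: RB => //; [apply: R1|apply: RM].
have Bu : B (u * g k).
  have -> : u * g k = (1 - r * t) * g k - r * c' * g k - r * e k * ((1 - r * t) * g k).
    by rewrite /u /w; ring.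
  have -> : (1 - r * t) * g k - r * c' * g k - r * e k * ((1 - r * t) * g k) =
     (1 - r * t) * b + r * b'.
    move: E1; move: ((1 - r * t) * g k) => X E1; rewrite {1}E1; ring.
  by apply: hBD; apply: hBM.
exists (w + t - r * w * t); split.
  apply: (RB HR); first exact: (RD HR).
  by apply: (RM HR) => //; apply: (RM HR).
move=> i; rewrite ltnS leq_eqVlt => /orP [/eqP ->|hi].
  have -> : (1 - r * (w + t - r * w * t)) * g k = (1 - r * t) * (u * g k) by rewrite /u; ring.
  by apply: hBM.
have [bi [ci [hbi [hci Ei]]]] := hB' i hi.
have -> : (1 - r * (w + t - r * w * t)) * g i = u * ((1 - r * t) * g i) by rewrite /u; ring.
rewrite Ei.
have -> : u * (bi + ci * g k) = u * bi + ci * (u * g k) by ring.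
by apply: hBD; apply: hBM.
Qed.

End Nak.

Section Avoid.
Variable S : comNzRingType.
Variable R : S -> Prop.
Hypothesis HR : is_subring R.

Definition PP (I : S -> Prop) (m : S) (A : S -> Prop) :=
  (forall z, A z -> R z) /\ (forall u v, A u -> A v -> A (u + v)) /\
  (forall c u, R c -> A u -> A (c * u)) /\ (forall k, ~ A (m ^+ k)) /\
  ((exists z, A z) -> forall z, I z -> A z).

Lemma avoid (I : S -> Prop) (m : S) : ideal_of R I -> R m -> (forall k, ~ I (m ^+ k)) ->
  exists P, prime_of R P /\ (forall z, I z -> P z) /\ ~ P m.
Proof.
move=> [IR [I0 [ID IM]]] hm hI.
have [A [[AR [AD [AM [Am AI]]]] Amax]] : exists A, PP I m A /\
    forall B, classical_sets.proper A B -> ~ PP I m B.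
  apply: classical_sets.Zorn_bigcup => F FP Ftot.
  split; [|split; [|split; [|split]]].
  - by move=> z [X FX Xz]; have [h _] := FP X FX; exact: h.
  - move=> u v [X FX Xu] [Y FY Yv].
    case: (Ftot X Y FX FY) => hXY.
      exists Y => //; have [_ [h _]] := FP Y FY; apply: h => //; exact: hXY.
    exists X => //; have [_ [h _]] := FP X FX; apply: h => //; exact: hXY.
  - move=> c u hc [X FX Xu]; exists X => //; have [_ [_ [h _]]] := FP X FX; exact: h.
  - move=> k [X FX Xk]; have [_ [_ [_ [h _]]]] := FP X FX; exact: h Xk.
  - move=> [w [X FX Xw]] z Iz; exists X => //.
    have [_ [_ [_ [_ h]]]] := FP X FX; apply: h => //; by exists w.
have hPI : PP I m I.
  split=> //; split=> //; split=> //; split=> // k; exact: hI.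
have AI' : forall z, I z -> A z.
  apply: AI; apply: NNPP => hne.
  apply: (Amax I) => //; split.
    by move=> z Az; exfalso; apply: hne; exists z.
  by move=> h; apply: hne; exists 0; apply: h.
have A1 : ~ A 1 by move=> h; apply: (Am 0%N); rewrite expr0.
have ext : forall a, R a -> ~ A a -> exists k p c, A p /\ R c /\ m ^+ k = p + c * a.
  move=> a ha nAa; apply: NNPP => hne.
  pose Aa := fun z => exists p c, A p /\ R c /\ z = p + c * a.
  apply: (Amax Aa).
    split.
      by move=> z Az; exists z, 0; split=> //; split; [apply: R0|rewrite mul0r addr0].
    by move=> h; apply: nAa; apply: h; exists 0, 1; split; [apply: AI'|split; [apply: R1|rewrite mul1r add0r]].
  split; [|split; [|split; [|split]]].
  - move=> z [p [c [hp [hc ->]]]]; apply: RD => //; [exact: AR|exact: RM].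
  - move=> u v [p [c [hp [hc ->]]]] [p' [c' [hp' [hc' ->]]]].
    exists (p + p'), (c + c'); split; first exact: AD.
    split; first exact: RD. ring.
  - move=> e u he [p [c [hp [hc ->]]]]; exists (e * p), (e * c); split; first exact: AM.
    split; first exact: RM. ring.
  - move=> k [p [c [hp [hc hk]]]]; apply: hne; exists k, p, c; done.
  - move=> _ z Iz; exists z, 0; split; first exact: AI'.
    by split; [apply: R0|rewrite mul0r addr0].
exists A; split; last first.
  split; first exact: AI'.
  by move=> h; apply: (Am 1%N); rewrite expr1.
split.
  split=> //; split; first exact: AI'.
  by split.
split=> // a b ha hb hab.
apply: NNPP => hn.
have nAa : ~ A a by move=> h; apply: hn; left.
have nAb : ~ A b by move=> h; apply: hn; right.
have [i [p [c [hp [hc Ei]]]]] := ext a ha nAa.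
have [j [q [e [hq [he Ej]]]]] := ext b hb nAb.
apply: (Am (i + j)%N); rewrite exprD Ei Ej.
have -> : (p + c * a) * (q + e * b) = (q + e * b) * p + (c * q) * a + (c * e) * (a * b) by ring.
have Rq : R q by exact: AR.
apply: (AD); [apply: (AD)|].
- by apply: (AM) => //; apply: RD => //; apply: RM.
- have -> : c * q * a = (c * a) * q by ring.
  by apply: (AM) => //; apply: RM.
- by apply: (AM) => //; apply: RM.
Qed.
End Avoid.

Lemma pigeon (A : Type) (l : list A) : forall (P : nat -> A -> Prop),
  (forall n, exists2 a, List.In a l & P n a) -> exists n m a, (n < m)%N /\ P n a /\ P m a.
Proof.
elim: l => [|a0 l IH] P H.
  by have [a []] := H 0%N.
case: (classic (exists n, P n a0 /\ exists m, (n < m)%N /\ P m a0)).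
  by move=> [n [hn [m [hm hm']]]]; exists n, m, a0.
move=> hno.
case: (classic (exists n, P n a0)) => [[n0 hn0]|hno2].
  have [n [m [a [hnm [h1 h2]]]]] : exists n m a, (n < m)%N /\ P (n0 + 1 + n)%N a /\ P (n0 + 1 + m)%N a.
    apply: (IH (fun k a => P (n0 + 1 + k)%N a)) => k.
    have [a [<-|hin] hp] := H (n0 + 1 + k)%N; last by exists a.
    exfalso; apply: hno; exists n0; split=> //; exists (n0 + 1 + k)%N; split=> //; lia.
  by exists (n0 + 1 + n)%N, (n0 + 1 + m)%N, a; split=> //; rewrite ltn_add2l.
apply: IH => k.
have [a [<-|hin] hp] := H k; last by exists a.
by exfalso; apply: hno2; exists k.
Qed.

Section Main.
Variable S : comNzRingType.
Variable R : S -> Prop.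
Hypothesis HR : is_subring R.

Lemma colon_ideal x : ideal_of R (colonR R x).
Proof.
split; first by move=> z [].
split; first by split; [apply: R0|rewrite mul0r; apply: R0].
split.
  move=> u v [hu hu'] [hv hv']; split; first exact: RD.
  by rewrite mulrDl; apply: RD.
move=> c u hc [hu hu']; split; first exact: RM.
by rewrite -mulrA; apply: RM.
Qed.

Lemma pow_prime P a k : prime_of R P -> R a -> P (a ^+ k) -> P a.
Proof.
move=> [hI [hP1 hPm]] ha; elim: k => [|k IH]; first by rewrite expr0.
rewrite exprS => h; case: (hPm _ _ ha (RX HR k ha) h) => //; exact: IH.
Qed.

Lemma span_R_mult d x u z : (forall i, (i < d)%N -> R (u * x ^+ i)) -> span R d x z -> R (u * z).
Proof.
move=> h [e [he ->]]; rewrite mulr_sumr; apply: Rsum => // i.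
rewrite mulrCA; apply: RM => //; exact: h.
Qed.

Lemma supp_of_colon P x : prime_of R P -> (forall z, colonR R x z -> P z) -> in_supp R P.
Proof.
move=> hP hsub; split=> //; exists x => t ht hnP htx; apply: hnP; apply: hsub; by split.
Qed.

Lemma crucial_rad M : crucial R M -> forall x, ~ R x ->
  forall r, R r -> (M r <-> radR R (colonR R x) r).
Proof.
move=> hM x hx r hr; split.
  move=> hMr; split=> //; apply: NNPP => hne.
  have [P [hP [hsub hPr]]] := avoid HR (colon_ideal x) hr (fun k h => hne (ex_intro _ k h)).
  have [_ hPM] := (hM P).1 (supp_of_colon hP hsub).
  by apply: hPr; apply: (proj2 (hPM r)).
move=> [_ [k hk]].
have h1 : forall j, ~ colonR R x (1 ^+ j) by move=> j [_]; rewrite expr1n mul1r.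
have [P [hP [hsub hP1]]] := avoid HR (colon_ideal x) (R1 HR) h1.
have [_ hPM] := (hM P).1 (supp_of_colon hP hsub).
apply: (proj1 (hPM r)); apply: (pow_prime hP hr); exact: hsub hk.
Qed.

Lemma x_adjoin x : adjoinR R x x.
Proof.
exists 2%N, (fun i => if i == 1%N then 1 else 0); split.
  by move=> i; case: eqP => _; [apply: R1|apply: R0].
by rewrite big_ord_recr big_ord1 /= mul0r add0r mul1r expr1.
Qed.

Lemma part2 M : maximal_of R M -> crucial R M -> integral_ext R ->
  critical_ideal R M /\
  forall x, ~ R x -> forall r, M r <-> radR R (conductorR R (adjoinR R x)) r.
Proof.
move=> [hMI [hM1 hMmax]] hM hint.
have MR : forall r, M r -> R r by case: hMI.
split.
  split=> // x hx r; split.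
    by move=> h; apply/(crucial_rad hM hx (MR _ h)).
  by move=> h; have [hr _] := h; apply/(crucial_rad hM hx hr).
move=> x hx r; split; last first.
  move=> [hr [k [hk hk']]]; apply/(crucial_rad hM hx hr); split=> //; exists k; split=> //.
  exact: hk' (x_adjoin x).
move=> hMr; have hr := MR _ hMr.
have [d [c [hc heq]]] := hint x.
have [K hK] : exists K, forall i, (i < d)%N -> R (r ^+ K * x ^+ i).
  elim: d {hc heq} => [|n [K hK]]; first by exists 0%N.
  case: (classic (R (x ^+ n))) => hxn.
    exists K => i; rewrite ltnS leq_eqVlt => /orP [/eqP ->|hi]; last exact: hK.
    by apply: RM => //; apply: RX.
  have [_ [k [_ hk]]] := (crucial_rad hM hxn hr).1 hMr.
  exists (K + k)%N => i; rewrite ltnS leq_eqVlt => /orP [/eqP ->|hi].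
    by rewrite exprD -mulrA; apply: RM => //; apply: RX.
  by rewrite exprD mulrAC; apply: RM => //; [exact: hK|apply: RX].
split=> //; exists K; split; first exact: RX.
move=> y hy; apply: (span_R_mult hK); exact: span_adjoin hy.
Qed.


Lemma key J x0 : critical_ideal R J -> ~ R x0 -> integral_ext R -> FCP R ->
  forall r, R r -> ~ J r -> exists t, R t /\ J (1 - r * t).
Proof.
move=> [hJI hJ] hx0 hint hfcp r hr hJr.
have [d [c [hc heq]]] := hint x0.
pose T := fun n : nat => fun z => exists a p, R a /\ span R d x0 p /\ z = a + r ^+ n * p.
have Tsub : forall n m, (n <= m)%N -> forall z, T m z -> T n z.
  move=> n m hnm z [a [p [ha [hp ->]]]]; exists a, (r ^+ (m - n) * p); split=> //; split.
    by apply: spanM => //; apply: RX.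
  by rewrite mulrA -exprD subnKC.
have Tsubalg : forall n, subalgebra R (T n).
  move=> n; split; last first.
    by move=> z hz; exists z, 0; split=> //; split; [apply: span0|rewrite mulr0 addr0].
  split; first by exists 1, 0; split; [apply: R1|split; [apply: span0|rewrite mulr0 addr0]].
  split.
    move=> u v [a [p [ha [hp ->]]]] [a' [p' [ha' [hp' ->]]]].
    exists (a - a'), (p - p'); split; first exact: RB.
    split; first exact: spanB. ring.
  move=> u v [a [p [ha [hp ->]]]] [a' [p' [ha' [hp' ->]]]].
  exists (a * a'), (a * p' + a' * p + r ^+ n * (p * p')); split; first exact: RM.
  split; last ring.
  apply: spanD => //; first (apply: spanD => //; apply: spanM => //).
  apply: spanM => //; first exact: RX.
  exact: (span_mulr HR hc heq).
pose C := fun X : S -> Prop => exists n, X = T n.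
have hC : is_chain R C.
  split; first by move=> X [n ->].
  move=> X Y [n ->] [m ->]; case: (leqP n m) => hnm.
    by right; apply: Tsub.
  by left; apply: Tsub; apply: ltnW.
have [l hl] := hfcp C hC.
have [n [m [X [hnm [hn hm]]]]] : exists n m X, (n < m)%N /\ (forall z, T n z <-> X z) /\ (forall z, T m z <-> X z).
  apply: (@pigeon _ l (fun k Y => forall z, T k z <-> Y z)) => n; have [X hX hTX] := hl (T n) (ex_intro _ n erefl); by exists X.
have hstab : forall z, T n z -> T n.+1 z.
  by move=> z hz; apply: (Tsub _ m) => //; apply/hm/hn.
pose g := fun i => r ^+ n * x0 ^+ i.
have [t [ht hB]] : exists t, R t /\ forall i, (i < d)%N -> R ((1 - r * t) * g i).
  apply: (nak HR hr (B := R)) => //; first exact: R0.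
  - by move=> u v; apply: RD.
  - by move=> a u; apply: RM.
  move=> i hi.
  have : T n (g i) by exists 0, (x0 ^+ i); split; [apply: R0|split; [apply: (span_pow HR hc heq)|rewrite add0r]].
  move=> /hstab [a [p [ha [[e [he ->]] ->]]]].
  exists a, e; split=> //; split=> //; congr (_ + _).
  rewrite exprS -mulrA; congr (_ * _); rewrite mulr_sumr; apply: eq_bigr => j _.
  rewrite /g; ring.
have hz : ~ R (r ^+ n * x0).
  move=> h; apply: hJr; apply/hJ; first exact: hx0.
  split=> //; exists n; split=> //; exact: RX.
exists t; split=> //.
have Rt1 : R (1 - r * t) by apply: (RB HR); [apply: (R1 HR)|apply: (RM HR)].
apply/(hJ _ hz); split=> //; exists 1%N; split; rewrite expr1 //.
rewrite mulrA; apply: (span_R_mult (d := d) (x := x0)) => //.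
  move=> i hi; rewrite -mulrA; exact: hB.
by rewrite -[x0]expr1; apply: (span_pow HR hc heq).
Qed.

End Main.

Theorem proposition6p8 (S : comNzRingType) (R : S -> Prop) :
  is_subring R -> (exists x : S, ~ R x) ->
  integral_ext R -> FCP R ->
  ((exists J, critical_ideal R J) <-> (exists M, maximal_of R M /\ crucial R M)) /\
  (forall M, maximal_of R M -> crucial R M ->
     critical_ideal R M /\
     forall x, ~ R x -> forall r, M r <-> radR R (conductorR R (adjoinR R x)) r).
Proof.
move=> HR [x0 hx0] hint hfcp.
split; last by move=> M hM hc; exact: part2.
split; last first.
  by move=> [M [hM hc]]; exists M; have [] := part2 HR hM hc hint.
move=> [J hJc]; exists J.
have hk := key HR hJc hx0 hint hfcp.
have [[JR [J0 [JD JM]]] hJ] := hJc.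
have J1 : ~ J 1.
  move=> h; have [_ [k [_ hk1]]] := (hJ x0 hx0 1).1 h.
  by apply: hx0; move: hk1; rewrite expr1n mul1r.
have Jprime : prime_of R J.
  split; first by split.
  split=> // a b ha hb hab; case: (classic (J a)) => hJa; first by left.
  right; have [t [ht h1]] := hk a ha hJa.
  have -> : b = b * (1 - a * t) + t * (a * b) by ring.
  by apply: JD; apply: JM.
split.
  split; first by split.
  split=> //.
  move=> I [IR [I0 [ID IM]]] hJI.
  case: (classic (forall z, I z -> J z)) => hIJ.
    by right=> z; split; [exact: hIJ|exact: hJI].
  left; have [a ha0] := not_all_ex_not _ _ hIJ.
  have [hIa hJa] := imply_to_and _ _ ha0.
  have ha := IR _ hIa.
  have [t [ht h1]] := hk a ha hJa.
  have -> : (1 : S) = (1 - a * t) + t * a by ring.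
  by apply: ID; [exact: hJI|exact: IM].
move=> P; split.
  move=> [hP [s hs]]; split=> //.
  have [[PR [P0 [PD PM]]] [P1 hPm]] := hP.
  have hsR : ~ R s.
    by move=> h; apply: (hs 1 (R1 HR) P1); rewrite mul1r.
  have JP : forall z, J z -> P z.
    move=> z hz; have [hzR [k [hk1 hk2]]] := (hJ s hsR z).1 hz.
    apply: (@pow_prime _ _ HR P z k hP hzR); apply: NNPP => hn; exact: hs _ hk1 hn hk2.
  move=> z; split; last exact: JP.
  move=> hPz; apply: NNPP => hJz.
  have [t [ht h1]] := hk z (PR _ hPz) hJz.
  apply: P1; have -> : (1 : S) = (1 - z * t) + t * z by ring.
  by apply: PD; [exact: JP|exact: PM].
move=> [hP hPJ]; split=> //; exists x0 => t ht hnP htx.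
apply: hnP; apply/hPJ; apply/(hJ x0 hx0); split=> //; exists 1%N; rewrite expr1; by split.
Qed.
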